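(* Let $T=2^t$ with $t\ge1$, and let $A_1,\ldots,A_r$ be subsets of $\mathbb Z_T$, each of size at least $2$, with $r\ge T^3$. Then the multiset $A_1+A_2+\cdots+A_r$ has bias at most $O(T^{3/2}/r^{1/2})$ with respect to the subgroup $\{0,2^{t-1}\}$ (i.e. at most $c_0T^{3/2}/r^{1/2}$ for an absolute constant $c_0$).
   Context: $\mathbb Z_T$ is the additive cyclic group of order $T$. For multisets $A,B$ of $\mathbb Z_T$, $A+B$ is the multiset $\{a+b: a\in A, b\in B\}$ (with multiplicities). $\mu_A(x)$ denotes the multiplicity of $x$ in $A$. A multiset $A$ has bias at most $\epsilon$ with respect to a subgroup $H\le\mathbb Z_T$ if $\mu_A(a)\le(1+\epsilon)\mu_A(a+h)$ for all $a\in A$ and all $h\in H$. *)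

(* Defs.v *)
From HB Require Import structures.
From mathcomp Require Import all_boot all_order all_algebra.
From mathcomp Require Import all_reals.
Set Implicit Arguments. Unset Strict Implicit. Unset Printing Implicit Defensive.
Import Order.TTheory GRing.Theory Num.Theory.
Local Open Scope ring_scope.

Definition sumset_mult (G : finZmodType) (r : nat) (A : 'I_r -> {set G}) (x : G) : nat :=
  #|[set f : {ffun 'I_r -> G} | [forall i, f i \in A i] && (\sum_(i < r) f i == x)]|.

Definition bias_at_most (R : numDomainType) (G : finZmodType) (mu : G -> nat)
    (H : {set G}) (eps : R) : Prop :=
  forall a h, (0 < mu a)%N -> h \in H -> (mu a)%:R <= (1 + eps) * (mu (a + h))%:R.

(* Main.v *)
Require Import Defs.
From HB Require Import structures.
From mathcomp Require Import all_boot all_order all_algebra.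
From mathcomp Require Import all_reals.
Set Warnings "-notation-overridden,-ambiguous-paths".
From mathcomp Require Import zify ring lra.
Import Order.TTheory GRing.Theory Num.Theory.
Lemma bin_up m l : 2 * l + 1 <= m -> 'C(m, l) <= 'C(m, l.+1).
Proof.
move=> H; have E := mul_bin_left m l.
have H1 : l.+1 <= m - l by lia.
have : l.+1 * 'C(m, l) <= l.+1 * 'C(m, l.+1).
  by rewrite E leq_mul2r H1 orbT.
by rewrite leq_mul2l.
Qed.

Lemma bin_down m l : m <= 2 * l + 1 -> 'C(m, l.+1) <= 'C(m, l).
Proof.
move=> H; have E := mul_bin_left m l.
have H1 : m - l <= l.+1 by lia.
have : l.+1 * 'C(m, l.+1) <= l.+1 * 'C(m, l).
  by rewrite E leq_mul2r H1 orbT.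
by rewrite leq_mul2l.
Qed.

Definition gdrop m l := 'C(m, l) - 'C(m, l.+1).

Lemma drops_tail m k :
  \sum_(m./2 <= l < m./2 + k) gdrop m l + 'C(m, m./2 + k) = 'C(m, m./2).
Proof.
elim: k => [|k IH]; first by rewrite addn0 big_geq.
rewrite addnS big_nat_recr /=; last by lia.
have Hd : 'C(m, (m./2 + k).+1) <= 'C(m, m./2 + k).
  by apply: bin_down; have := odd_double_half m; rewrite -muln2; case: (odd m) => /=; lia.
rewrite -[in RHS]IH {2}/gdrop.
set S := \sum_(_ <= _ < _) _. set a := 'C(m, m./2 + k) in Hd *. set b := 'C(m, _.+1) in Hd *. lia.
Qed.

Lemma drops_head m l : l < m./2 -> gdrop m l = 0.
Proof.
move=> H; apply/eqP; rewrite /gdrop subn_eq0; apply: bin_up.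
have := odd_double_half m; rewrite -muln2; case: (odd m) => /=; lia.
Qed.

Lemma drops_sum m N : \sum_(0 <= l < N) gdrop m l <= 'C(m, m./2).
Proof.
have H1 : \sum_(0 <= l < N) gdrop m l <= \sum_(0 <= l < m./2 + N) gdrop m l.
  rewrite [X in _ <= X](big_cat_nat (n := N)) //=; last exact: leq_addl.
  exact: leq_addr.
apply: (leq_trans H1).
rewrite (big_cat_nat (n := m./2)) //=; last exact: leq_addr.
rewrite big_nat_cond big1 ?add0n; last first.
  by move=> l /andP[/andP[_ Hl] _]; apply: drops_head.
by rewrite -[X in _ <= X](drops_tail m N) leq_addr.
Qed.

Lemma bin_rec n : n.+1 * 'C(n.*2.+1, n) = n.*2.+1 * 'C(n.*2, n)
  /\ 'C(n.+1.*2, n.+1) = 2 * 'C(n.*2.+1, n).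
Proof.
split.
  have Hs : 'C(n.*2.+1, n) = 'C(n.*2.+1, n.+1).
    rewrite -bin_sub; last by rewrite -muln2; lia.
    by congr 'C(_, _); rewrite -muln2; lia.
  by rewrite Hs; have := mul_bin_diag n.*2.+1 n; rewrite /= => ->.
have := mul_bin_diag n.+1.*2 n; rewrite doubleS /= => H.
have : n.+1 * 'C(n.*2.+2, n.+1) = n.+1 * (2 * 'C(n.*2.+1, n)) by rewrite -H; lia.
by move/eqP; rewrite eqn_mul2l /= => /eqP.
Qed.

Lemma central_even n : 'C(n.*2, n) ^ 2 * (3 * n + 1) <= 16 ^ n.
Proof.
elim: n => [|n IH]; first by rewrite bin0.
have [E1 E2] := bin_rec n.
rewrite E2.
set c := 'C(n.*2, n) in IH E1 *; set x := 'C(n.*2.+1, n) in E1 *.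
have P : (n.*2.+1) ^ 2 * (3 * n + 4) <= 4 * n.+1 ^ 2 * (3 * n + 1) by rewrite -!muln2; nia.
suff : n.+1 ^ 2 * ((2 * x) ^ 2 * (3 * n.+1 + 1)) <= n.+1 ^ 2 * 16 ^ n.+1.
  by rewrite leq_mul2l expn_eq0 /=.
have -> : n.+1 ^ 2 * ((2 * x) ^ 2 * (3 * n.+1 + 1)) = 4 * (n.+1 * x) ^ 2 * (3 * n + 4) by lia.
rewrite E1 [16 ^ n.+1]expnS.
have : 4 * (n.*2.+1 * c) ^ 2 * (3 * n + 4) <= 16 * n.+1 ^ 2 * (c ^ 2 * (3 * n + 1)).
  have -> : 4 * (n.*2.+1 * c) ^ 2 * (3 * n + 4) = 4 * c ^ 2 * ((n.*2.+1) ^ 2 * (3 * n + 4)) by lia.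
  have -> : 16 * n.+1 ^ 2 * (c ^ 2 * (3 * n + 1)) = 4 * c ^ 2 * (4 * n.+1 ^ 2 * (3 * n + 1)) by lia.
  by rewrite leq_mul2l P orbT.
move=> H; apply: (leq_trans H).
by rewrite -mulnA [X in _ <= X]mulnCA !leq_mul2l IH !orbT.
Qed.

Lemma central_bound m : 'C(m, m./2) ^ 2 * (3 * m) <= 2 * 4 ^ m.
Proof.
have Hm := odd_double_half m.
set n := m./2 in Hm *.
have E16 : forall k, 4 ^ (k.*2) = 16 ^ k by move=> k; rewrite -muln2 mulnC expnM.
case: (odd m) Hm => /= Hm; rewrite -Hm.
- have [_ E2] := bin_rec n. have H := central_even n.+1. rewrite E2 in H.
  rewrite add1n.
  set x := 'C(n.*2.+1, n) in H *.
  rewrite [4 ^ _]expnS E16 [16 ^ _]expnS in H *. rewrite -!muln2 in H *.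
  have E : (2 * x) ^ 2 = 4 * x ^ 2 by rewrite expnMn.
  rewrite E in H. set X := x ^ 2 in H *. set Y := 16 ^ n in H *. nia.
- have H := central_even n. rewrite add0n E16. rewrite -!muln2 in H *.
  set X := 'C(_, n) ^ 2 in H *. set Y := 16 ^ n in H *. nia.
Qed.
Lemma tele (a : nat -> nat) k s :
  a k <= a (k + s) + \sum_(k <= l < k + s) (a l - a l.+1).
Proof.
elim: s => [|s IH]; first by rewrite addn0 big_geq // addn0.
rewrite addnS (@big_nat_recr _ _ _ (k + s) k) /=; last exact: leq_addr.
set S := \sum_(_ <= _ < _) _ in IH *.
set x := a (k + s) in IH *. set y := a (k + s).+1. lia.
Qed.

Lemma uniq_sum N (P : pred nat) c :
  (forall k k', P k -> P k' -> k = k') -> \sum_(0 <= k < N | P k) c <= c.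
Proof.
move=> HP; elim: N => [|N IH]; first by rewrite big_geq.
rewrite big_mkcond (@big_nat_recr _ _ _ N 0) //= -big_mkcond /=.
case: ifP => PN; last by rewrite addn0.
rewrite big_nat_cond big1 ?add0n // => k /andP[/andP[_ Hk] Pk].
by move: (HP _ _ Pk PN) Hk => ->; rewrite ltnn.
Qed.

Lemma widen_bin m N (P : pred nat) : m < N ->
  \sum_(0 <= k < N | P k) 'C(m, k) = \sum_(0 <= k < m.+1 | P k) 'C(m, k).
Proof.
move=> H; rewrite (big_cat_nat (n := m.+1)) //=.
have Z : \sum_(m.+1 <= k < N | P k) 'C(m, k) = 0.
  by rewrite big_nat_cond big1 // => k /andP[/andP[Hk _] _]; exact: bin_small.
by rewrite Z addn0.
Qed.

Lemma latL m N s (P Q : pred nat) : m < N ->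
  (forall k k', P k -> P k' -> k < k' -> k + s <= k') ->
  (forall k, P k -> Q (k + s)) ->
  \sum_(0 <= k < N | P k) 'C(m, k) <= \sum_(0 <= k < N | Q k) 'C(m, k) + 'C(m, m./2).
Proof.
move=> HN Hsp HPQ.
have S1 : \sum_(0 <= k < N | P k) 'C(m, k) <=
  \sum_(0 <= k < N | P k) ('C(m, k + s) + \sum_(k <= l < k + s) gdrop m l).
  by apply: leq_sum => k _; exact: (tele (fun l => 'C(m, l))).
rewrite big_split /= in S1.
have S2 : \sum_(0 <= k < N | P k) 'C(m, k + s) <= \sum_(0 <= k < N | Q k) 'C(m, k).
  apply: (@leq_trans (\sum_(0 <= k < N | Q (k + s)) 'C(m, k + s))).
    rewrite [X in _ <= X]big_mkcond [X in X <= _]big_mkcond /=; apply: leq_sum => k _.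
    by case: ifP => // /HPQ ->.
  rewrite -{1}[N](addnK s) -(big_addn 0 (N + s) s Q (fun j => 'C(m, j))) add0n.
  rewrite [X in _ <= X](@widen_bin m N Q HN) -(@widen_bin m (N + s)); last by lia.
  by rewrite [X in _ <= X](big_cat_nat (n := s)) //= ?leq_addl // leq_addr.
have S3 : \sum_(0 <= k < N | P k) \sum_(k <= l < k + s) gdrop m l <= 'C(m, m./2).
  apply: (@leq_trans (\sum_(0 <= l < N + s) gdrop m l)); last exact: drops_sum.
  rewrite big_nat_cond (eq_bigr (fun k => \sum_(0 <= l < N + s) (if (k <= l) && (l < k + s) then gdrop m l else 0))); last first.
    move=> k /andP[/andP[_ HkN] _]; rewrite -big_mkcond /= (@big_nat_widenl _ _ _ k 0) //.
    rewrite (@big_nat_widen _ _ _ 0 (k + s) (N + s)); last first.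
      by rewrite leq_add2r ltnW.
    by apply: eq_bigl => l; rewrite andbC.
  rewrite exchange_big_nat /=; apply: leq_sum => l _.
  rewrite -big_mkcondr /=; apply: uniq_sum => k k' /andP[/andP[_ Pk] /andP[H1 H2]] /andP[/andP[_ Pk'] /andP[H1' H2']].
  case: (ltngtP k k') => // Hkk.
  - by have := Hsp _ _ Pk Pk' Hkk; lia.
  - by have := Hsp _ _ Pk' Pk Hkk; lia.
lia.
Qed.
Section Grp.
Variable G : finZmodType.
Local Open Scope ring_scope.

Definition Bf (d0 : G) m (b : G) : nat :=
  (\sum_(0 <= k < m.+1 | d0 *+ k == b) 'C(m, k))%N.

Lemma Bshift d0 m b1 b2 : (exists j, d0 *+ j = b2 - b1) ->
  (Bf d0 m b1 <= Bf d0 m b2 + 'C(m, m./2))%N.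
Proof.
move=> ex.
have ex' : exists j, d0 *+ j == b2 - b1 by case: ex => j Hj; exists j; apply/eqP.
case: (ex_minnP ex') => s /eqP Hs Hmin.
apply: (@latL m m.+1 s) => //.
- move=> k k' /eqP Pk /eqP Pk' Hkk; rewrite leqNgt; apply/negP => Hlt.
  have Hz : d0 *+ (k' - k) = 0 by rewrite mulrnBr ?Pk ?Pk' ?subrr // ltnW.
  have Hp : d0 *+ (s - (k' - k)) == b2 - b1.
    by rewrite mulrnBr ?Hz ?subr0 ?Hs //; lia.
  have := Hmin _ Hp; lia.
- by move=> k /eqP Pk; rewrite mulrnDr Pk Hs addrC subrK.
Qed.

Lemma Bsum d0 m : (\sum_(b : G) Bf d0 m b = 2 ^ m)%N.
Proof.
rewrite /Bf.
rewrite (eq_bigr (fun b => \sum_(0 <= k < m.+1) if d0 *+ k == b then 'C(m, k) else 0)%N);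
  last by move=> b _; rewrite big_mkcond.
rewrite exchange_big /=.
rewrite (eq_bigr (fun k => 'C(m, k))); last first.
  move=> k _; rewrite -big_mkcond /=.
  by rewrite (eq_bigl (fun b => b == d0 *+ k)) ?big_pred1_eq // => b; rewrite eq_sym.
have := expnDn 1 1 m; rewrite addnn /= => ->.
rewrite big_mkord; apply: eq_bigr => i _; by rewrite !exp1n !muln1.
Qed.

Lemma Bexists d0 m b : (0 < Bf d0 m b)%N -> exists k, d0 *+ k = b.
Proof.
case: (boolP [exists k : 'I_(m.+1), d0 *+ k == b]) => [/existsP [k /eqP Hk] _| /existsPn Hn].
  by exists k.
rewrite /Bf big_nat_cond big1 // => k /andP[/andP[_ Hk] Hkb].
by have := Hn (Ordinal Hk); rewrite Hkb.
Qed.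

Lemma Bratio (R : realType) T (d0 h : G) m (eps : R) :
  #|G| = T -> (0 < T)%N -> (forall x : G, x *+ T = 0) -> (exists j, d0 *+ j = h) -> 0 <= eps ->
  (T * 'C(m, m./2))%:R * (1 + eps) <= eps * (2 ^ m)%:R ->
  forall b, (Bf d0 m b)%:R <= (1 + eps) * (Bf d0 m (b + h))%:R.
Proof.
move=> cardG T0 Tz [s Hs] e0 Hcond b.
have [Hb0|Hbpos] := posnP (Bf d0 m b).
  by rewrite Hb0 mulr_ge0 // ?ler0n // addr_ge0.
have [k0 Hk0] := Bexists _ _ _ Hbpos.
have key : forall b'', (Bf d0 m b'' <= Bf d0 m (b + h)%R + 'C(m, m./2))%N.
  move=> b''; have [->|Hb''] := posnP (Bf d0 m b''); first by [].
  have [k'' Hk''] := Bexists _ _ _ Hb''.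
  apply: Bshift; exists (k0 + s + k'' * (T - 1))%N.
  have Hneg : (d0 *+ k'') *+ (T - 1) = - (d0 *+ k'').
    apply/eqP; rewrite -addr_eq0 -mulrSr.
    have -> : (T - 1).+1 = T by lia.
    by rewrite Tz.
  by rewrite !mulrnDr mulrnA Hneg Hk0 Hs Hk''.
have H1 : (Bf d0 m b <= Bf d0 m (b + h)%R + 'C(m, m./2))%N.
  by apply: Bshift; exists s; rewrite Hs addrC addKr.
have H2 : (2 ^ m <= T * (Bf d0 m (b + h)%R + 'C(m, m./2)))%N.
  rewrite -(Bsum d0 m) -cardG -sum_nat_const.
  by apply: leq_sum => b'' _; exact: key.
move: H1 H2 Hcond; rewrite -!(ler_nat R) !natrM !natrD.
set B := (Bf d0 m b)%:R; set B2 := (Bf d0 m (b + h))%:R.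
set M := ('C(m, m./2))%:R; set P := (2 ^ m)%:R; set t := T%:R.
move=> H1 H2 H3.
have t0 : 0 < t by rewrite ltr0n.
have M0 : 0 <= M by rewrite ler0n.
have : t * M <= t * (eps * B2) by nra.
rewrite ler_pM2l // => H4.
lra.
Qed.
End Grp.
Arguments Bf {G} d0 m b.
Arguments Bratio {G R} T d0 h m eps.
Lemma split_sets (I : finType) (J : {set I}) (F : {set I} -> nat) :
  (\sum_(S : {set I}) F S =
   \sum_(U : {set I} | U \subset ~: J) \sum_(V : {set I} | V \subset J) F (U :|: V))%N.
Proof.
rewrite (partition_big (fun S => S :\: J) (fun U => U \subset ~: J)) /=; last first.
  by move=> S _; apply/subsetP => i; rewrite !inE => /andP[].
apply: eq_bigr => U HU.
rewrite (reindex_onto (fun V => U :|: V) (fun S => S :&: J)) /=; last first.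
  move=> S /eqP HS; apply/setP => i; rewrite -HS !inE.
  by case: (i \in J); case: (i \in S).
apply: eq_bigl => V.
have HUi := subsetP HU.
apply/andP/idP => [[_ /eqP <-]|HV]; first exact: subsetIr.
have HVi := subsetP HV.
split; apply/eqP/setP => i; rewrite !inE.
- case HiJ: (i \in J) => /=.
  + case HiU: (i \in U) => //; by have := HUi i HiU; rewrite !inE HiJ.
  + case HiV: (i \in V); last by rewrite orbF.
    by have := HVi i HiV; rewrite HiJ.
- case HiJ: (i \in J); rewrite ?andbT ?andbF //.
  case HiU: (i \in U) => //=; by have := HUi i HiU; rewrite !inE HiJ.
  case HiV: (i \in V) => //; by have := HVi i HiV; rewrite HiJ.
Qed.

Lemma sum_pick N (P : pred nat) x : (x < N)%N ->
  (\sum_(0 <= k < N | P k) (x == k) = P x)%N.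
Proof.
move=> HxN; rewrite big_mkcond (bigD1_seq x) /= ?mem_index_iota ?iota_uniq //.
rewrite eqxx big1 ?addn0; first by case: (P x).
by move=> k Hk; case: (P k) => //; rewrite eq_sym (negbTE Hk).
Qed.

Section Walk.
Variable G : finZmodType.
Local Open Scope ring_scope.

Definition Wset r (c : G) (d : 'I_r -> G) (a : G) : nat :=
  \sum_(S : {set 'I_r}) nat_of_bool ((c + \sum_(i in S) d i)%R == a).

Lemma Bcount (I : finType) (J : {set I}) (d0 b : G) :
  \sum_(V : {set I} | V \subset J) nat_of_bool (d0 *+ #|V| == b) = Bf d0 #|J| b.
Proof.
rewrite /Bf.
rewrite (eq_bigr (fun k => \sum_(V : {set I} | V \subset J) nat_of_bool (#|V| == k))); last first.
  move=> k _; rewrite -cards_draws -sum1dep_card.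
  by rewrite big_mkcondr /=; apply: eq_bigr => V _; case: (_ == _).
rewrite exchange_big /=; apply: eq_bigr => V HV.
rewrite sum_pick //; rewrite ltnS; exact: subset_leq_card.
Qed.

Lemma Wsplit r (c : G) (d : 'I_r -> G) (d0 : G) a :
  let J := [set i | d i == d0] in
  Wset _ c d a = \sum_(U : {set 'I_r} | U \subset ~: J) Bf d0 #|J| (a - c - \sum_(i in U) d i)%R.
Proof.
move=> J; rewrite /Wset (split_sets _ J); apply: eq_bigr => U HU.
rewrite -Bcount; apply: eq_bigr => V HV.
have -> : \sum_(i in U :|: V) d i = \sum_(i in U) d i + \sum_(i in V) d i.
  rewrite -bigU /=; first by apply: eq_bigl => i; rewrite !inE.
  rewrite disjoint_subset; apply/subsetP => i HiU; rewrite !inE; apply/negP => HiV.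
  have h1 := subsetP HU i HiU; have h2 := subsetP HV i HiV.
  by rewrite !inE in h1 h2; rewrite h2 in h1.
have -> : \sum_(i in V) d i = d0 *+ #|V|.
  rewrite -sumr_const; apply: eq_bigr => i HiV.
  by have := subsetP HV i HiV; rewrite inE => /eqP.
congr (nat_of_bool _); rewrite [RHS]eq_sym !subr_eq [LHS]eq_sym; congr (a == _).
by rewrite addrC (addrC (\sum_(i in U) d i)).
Qed.
End Walk.
Arguments Wset {G r} c d a.
Arguments Wsplit {G r} c d d0 a.
Lemma walk_bias (R : realType) (G : finZmodType) r T (c : G) (d : 'I_r -> G) (h : G) (eps : R) :
  #|G| = T -> (0 < T)%N -> (0 < r)%N -> (forall x : G, (x *+ T = 0)%R) ->
  (forall x : G, x != 0%R -> exists j, (x *+ j = h)%R) -> (forall i, d i != 0%R) -> (0 <= eps)%R ->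
  (forall m, (r <= m * T)%N -> ((T * 'C(m, m./2))%:R * (1 + eps) <= eps * (2 ^ m)%:R)%R) ->
  forall a, ((Wset c d a)%:R <= (1 + eps) * (Wset c d (a + h)%R)%:R)%R.
Proof.
move=> cardG T0 r0 Tz Hh Hd e0 Hc a.
pose cnt g := #|[set i | d i == g]|.
case: (@arg_maxnP G 0%R xpredT cnt erefl) => d0 _ Hmax.
have Hr : (r <= cnt d0 * T)%N.
  have -> : r = \sum_(i : 'I_r) 1 by rewrite sum1_card card_ord.
  rewrite (partition_big d xpredT) //=.
  apply: (@leq_trans (\sum_(g : G) cnt d0)); last by rewrite sum_nat_const cardG mulnC.
  apply: leq_sum => g _; apply: (leq_trans _ (Hmax g erefl)).
  by rewrite /cnt -sum1dep_card.
set J := [set i | d i == d0] in Hr.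
have d0nz : d0 != 0%R.
  have : (0 < #|J|)%N by move: Hr r0; rewrite /cnt -/J; case: #|J| => //= ; rewrite mul0n; lia.
  rewrite card_gt0 => /set0Pn [i]; rewrite inE => /eqP <-; exact: Hd.
have hd := Hh d0 d0nz.
rewrite (Wsplit c d d0 a) (Wsplit c d d0 (a + h)%R) /=.
rewrite !natr_sum mulr_sumr; apply: ler_sum => U _.
rewrite (addrAC a h) (addrAC (a - c)%R h).
exact: (Bratio T d0 h #|J| eps cardG T0 Tz hd e0 (Hc _ Hr)).
Qed.
Lemma prod_bool (I : finType) (P : pred I) :
  \prod_i nat_of_bool (P i) = nat_of_bool [forall i, P i].
Proof.
case: (boolP [forall i, P i]) => [/forallP H | /forallPn [i Hi]].
  by rewrite big1 // => i _; rewrite H.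
by rewrite (bigD1 i) //= (negbTE Hi) mul0n.
Qed.

Definition off (T : finType) (A : {set T}) (q : T * T) : bool :=
  [&& q.1 \in A, q.2 \in A & q.1 != q.2].
Definition sel (T : Type) (q : T * T) (e : bool) : T := if e then q.2 else q.1.
Arguments off {T} A q. Arguments sel {T} q e.

Lemma count_other (T : finType) (A : {set T}) z :
  \sum_(y : T) nat_of_bool [&& z \in A, y \in A & z != y] = (z \in A) * (#|A| - 1).
Proof.
case Hz: (z \in A) => /=; last by rewrite big1.
rewrite mul1n (cardsD1 z A) Hz add1n subn1 /= -sum1_card [RHS]big_mkcond /=.
by apply: eq_bigr => y _; rewrite !inE eq_sym andbC; case: (_ && _).
Qed.

Lemma per_i (T : finType) (A : {set T}) z :
  2 * (#|A| - 1) * (z \in A) =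
  \sum_(q : T * T) off A q * \sum_(e : bool) nat_of_bool (sel q e == z).
Proof.
rewrite (eq_bigr (fun q => off A (q.1, q.2) * \sum_(e : bool) nat_of_bool (sel (q.1, q.2) e == z))); last by case.
rewrite -(pair_bigA _ (fun x y => off A (x, y) * \sum_(e : bool) nat_of_bool (sel (x, y) e == z))) /=.
rewrite (eq_bigr (fun x => \sum_y (off A (x, y) * (y == z) + off A (x, y) * (x == z)))); last first.
  by move=> x _; apply: eq_bigr => y _; rewrite big_bool /= mulnDr.
rewrite (eq_bigr (fun x => \sum_y off A (x, y) * (y == z) + \sum_y off A (x, y) * (x == z))); last first.
  by move=> x _; rewrite big_split.
rewrite big_split /=.
have E1 : \sum_x \sum_y off A (x, y) * (y == z) = \sum_x nat_of_bool [&& z \in A, x \in A & z != x].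
  apply: eq_bigr => x _; rewrite (bigD1 z) //= big1 ?addn0.
    rewrite eqxx muln1 /off /=; case: (x \in A); case: (z \in A); rewrite //= eq_sym //.
  by move=> y Hy; rewrite (negbTE Hy) muln0.
have E2 : \sum_x \sum_y off A (x, y) * (x == z) = \sum_y nat_of_bool [&& z \in A, y \in A & z != y].
  rewrite (bigD1 z) //= [X in _ + X = _]big1 ?addn0.
    by apply: eq_bigr => y _; rewrite eqxx muln1.
  by move=> x Hx; apply: big1 => y _; rewrite (negbTE Hx) muln0.
rewrite E1 E2 !count_other; lia.
Qed.
Section Decomp.
Variable G : finZmodType.
Local Open Scope ring_scope.

Definition Wpair r (p : {ffun 'I_r -> G * G}) (a : G) : nat :=
  (\sum_(e : {ffun 'I_r -> bool}) nat_of_bool ((\sum_i sel (p i) (e i))%R == a))%N.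

Lemma pick_ffun r (g : {ffun 'I_r -> G}) a :
  (\sum_(f : {ffun 'I_r -> G}) nat_of_bool ((\sum_i f i)%R == a) * \prod_i nat_of_bool (g i == f i) =
   nat_of_bool ((\sum_i g i)%R == a))%N.
Proof.
rewrite (bigD1 g) //= [X in (_ + X)%N = _]big1 ?addn0.
  have Ht : [forall i, g i == g i] by apply/forallP => i.
  by rewrite prod_bool Ht muln1.
move=> f Hf; rewrite prod_bool; case: (boolP [forall i, g i == f i]) => [/forallP H|_]; last by rewrite muln0.
have E : g = f by apply/ffunP => i; apply/eqP; exact: H.
by rewrite E eqxx in Hf.
Qed.

Lemma decomp r (A : 'I_r -> {set G}) a :
  ((\prod_i (2 * (#|A i| - 1))) * sumset_mult A a =
   \sum_(p : {ffun 'I_r -> G * G}) nat_of_bool [forall i, off (A i) (p i)] * Wpair _ p a)%N.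
Proof.
have Hmu : sumset_mult A a = (\sum_(f : {ffun 'I_r -> G})
    nat_of_bool ([forall i, f i \in A i] && ((\sum_i f i)%R == a)))%N.
  by rewrite /sumset_mult -sum1dep_card big_mkcond /=; apply: eq_bigr => f _; case: ifP.
rewrite Hmu big_distrr /=.
rewrite (eq_bigr (fun f : {ffun 'I_r -> G} => \sum_(p : {ffun 'I_r -> G * G}) \sum_(e : {ffun 'I_r -> bool})
   nat_of_bool ((\sum_i f i)%R == a) * (nat_of_bool [forall i, off (A i) (p i)] *
     \prod_i nat_of_bool (sel (p i) (e i) == f i)))%N); last first.
  move=> f _.
  rewrite -mulnb -prod_bool mulnCA.
  have -> : (\prod_i nat_of_bool (f i \in A i) * (\prod_(i < r) (2 * (#|A i| - 1)) * nat_of_bool ((\sum_(i < r) f i)%R == a)) =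
     nat_of_bool ((\sum_(i < r) f i)%R == a) * \prod_i (2 * (#|A i| - 1) * nat_of_bool (f i \in A i)))%N.
    rewrite [in RHS]big_split /=. set x := \prod_i _. set y := \prod_(i < r) _. set z := nat_of_bool _. by rewrite mulnC -mulnA mulnCA.
  rewrite (eq_bigr (fun i => \sum_(q : G * G) off (A i) q * \sum_(e : bool) nat_of_bool (sel q e == f i)))%N; last first.
    by move=> i _; rewrite per_i.
  rewrite bigA_distr_bigA big_distrr /=; apply: eq_bigr => p _.
  by rewrite big_split /= prod_bool bigA_distr_bigA /= !big_distrr /=.
rewrite exchange_big /=; apply: eq_bigr => p _.
rewrite exchange_big /= /Wpair big_distrr /=; apply: eq_bigr => e _.
pose g := [ffun i => sel (p i) (e i)].
have Hg : (\sum_i g i)%R = (\sum_i sel (p i) (e i))%R by apply: eq_bigr => i _; rewrite ffunE.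
rewrite -Hg -(pick_ffun _ g) big_distrr /=; apply: eq_bigr => f _.
rewrite mulnCA; congr (_ * (_ * _))%N.
by apply: eq_bigr => i _; rewrite ffunE.
Qed.
End Decomp.
Arguments Wpair {G r} p a.
Lemma Wpair_set (G : finZmodType) r (p : {ffun 'I_r -> G * G}) a :
  Wpair p a = Wset (\sum_i (p i).1)%R (fun i => (p i).2 - (p i).1)%R a.
Proof.
rewrite /Wpair /Wset.
rewrite (reindex (fun S : {set 'I_r} => [ffun i => i \in S])) /=; last first.
  exists (fun e : {ffun 'I_r -> bool} => [set i | e i]) => [S _ | e _].
    by apply/setP => i; rewrite inE ffunE.
  by apply/ffunP => i; rewrite ffunE inE.
apply: eq_bigr => S _; congr (nat_of_bool (_ == a)).
rewrite [X in _ = (_ + X)%R]big_mkcond /= -big_split /=; apply: eq_bigr => i _.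
rewrite ffunE /sel; case: (i \in S); last by rewrite addr0.
by rewrite addrC subrK.
Qed.
Lemma pow2_half t d : (0 < d < 2 ^ t.+1)%N -> exists j, ((d * j) %% 2 ^ t.+1 = 2 ^ t)%N.
Proof.
elim: t d => [|t IH] d Hd.
  by exists 1; have -> : d = 1%N by rewrite expn1 in Hd; lia.
have Hdd := odd_double_half d.
case Ho: (odd d) Hdd => /= Hdd.
  exists (2 ^ t.+1); rewrite -Hdd -muln2 mulnDl mul1n.
  have -> : (d./2 * 2 * 2 ^ t.+1 = d./2 * 2 ^ t.+2)%N by rewrite -mulnA -expnS.
  rewrite addnC modnMDl modn_small //; rewrite ltn_exp2l //.
have Hd' : (0 < d./2 < 2 ^ t.+1)%N.
  rewrite -muln2 add0n in Hdd; rewrite expnS in Hd; lia.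
have [j Hj] := IH _ Hd'.
exists j; rewrite -Hdd add0n -muln2 [(_ * 2)%N]mulnC -mulnA expnS -muln_modr Hj.
by rewrite -expnS.
Qed.
Lemma two_pow_gt1 s : (1 < 2 ^ s.+1)%N.
Proof. by rewrite -{1}(expn0 2) ltn_exp2l. Qed.

Lemma Zp_card s : #|{: 'Z_(2 ^ s.+1)}| = (2 ^ s.+1)%N.
Proof. by rewrite card_ord Zp_cast // two_pow_gt1. Qed.

Lemma Zp_T s (x : 'Z_(2 ^ s.+1)) : (x *+ 2 ^ s.+1 = 0)%R.
Proof.
apply: val_inj; rewrite Zp_mulrn /=.
have HN := Zp_cast (two_pow_gt1 s).
by rewrite [X in _ %% X]HN modnMl.
Qed.

Lemma Zp_half s (x : 'Z_(2 ^ s.+1)) : x != 0%R -> exists j, (x *+ j = (2 ^ s)%:R)%R.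
Proof.
move=> Hx.
have Hv : (0 < val x < 2 ^ s.+1)%N.
  apply/andP; split.
    by rewrite lt0n; apply: contra Hx => /eqP Hv; apply/eqP; apply: val_inj.
  have H := ltn_ord x; have HN := Zp_cast (two_pow_gt1 s).
  by rewrite [X in _ < X]HN in H.
have [j Hj] := pow2_half _ _ Hv.
exists j; apply: val_inj; rewrite Zp_mulrn /= val_Zp_nat ?two_pow_gt1 //.
have HN := Zp_cast (two_pow_gt1 s).
rewrite [X in _ %% X]HN Hj modn_small //.
by rewrite ltn_exp2l.
Qed.
Lemma four_pow m : (4 ^ m = (2 ^ m) ^ 2)%N.
Proof. by rewrite -expnM mulnC expnM. Qed.

Local Open Scope ring_scope.
Lemma analytic (R : realType) (T r m : nat) : (2 <= T)%N -> (T ^ 3 <= r)%N -> (r <= m * T)%N ->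
  (T * 'C(m, m./2))%:R * (1 + 10 * (T%:R * Num.sqrt T%:R) / Num.sqrt r%:R)
    <= (10 * (T%:R * Num.sqrt T%:R) / Num.sqrt r%:R) * (2 ^ m)%:R :> R.
Proof.
move=> HT Hr Hm.
have r0 : (0 < r)%N by apply: leq_trans Hr; rewrite expn_gt0; lia.
have m0 : (0 < m)%N by move: Hm r0; case: m => //; rewrite mul0n; lia.
have hc := central_bound m.
rewrite four_pow in hc.
move: hc Hr Hm; rewrite -!(ler_nat R) !natrM.
set Mr := ('C(m, m./2))%:R; set Pr := (2 ^ m)%:R; set mr := m%:R; set Tr := T%:R; set rr := r%:R.
move=> hc Hr Hm.
have {}hc : Mr ^+ 2 * (3 * mr) <= 2 * Pr ^+ 2 by rewrite !expr2.
have Tpos : 0 < Tr by rewrite ltr0n; lia.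
have rpos : 0 < rr by rewrite ltr0n.
have mpos : 0 < mr by rewrite ltr0n.
have M0 : 0 <= Mr by rewrite ler0n.
have P0 : 0 <= Pr by rewrite ler0n.
set sT := Num.sqrt Tr; set sr := Num.sqrt rr.
have sT2 : sT ^+ 2 = Tr by rewrite sqr_sqrtr // ltW.
have sr2 : sr ^+ 2 = rr by rewrite sqr_sqrtr // ltW.
have sT0 : 0 <= sT by rewrite sqrtr_ge0.
have srpos : 0 < sr by rewrite sqrtr_gt0.
set x := 10 * (Tr * sT) / sr.
have x0 : 0 <= x by rewrite /x; apply: divr_ge0; [nra | lra].
have s1 : x ^+ 2 * rr = 100 * Tr ^+ 3.
  rewrite /x -sr2 -sT2; field; by rewrite gt_eqF.
have x1 : x <= 10.
  have : x ^+ 2 * rr <= 100 * rr by rewrite s1; lra.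
  rewrite ler_pM2r // => hx; nra.
set a := Tr * Mr * (1 + x).
have a0 : 0 <= a by rewrite /a; apply: mulr_ge0; [nra | lra].
have b0 : 0 <= x * Pr by nra.
have key : a ^+ 2 * (3 * mr * rr) <= (x * Pr) ^+ 2 * (3 * mr * rr).
  have -> : a ^+ 2 * (3 * mr * rr) = (Tr ^+ 2 * (1 + x) ^+ 2 * rr) * (Mr ^+ 2 * (3 * mr)) by rewrite /a; ring.
  have -> : (x * Pr) ^+ 2 * (3 * mr * rr) = 300 * Tr ^+ 3 * mr * Pr ^+ 2.
    have -> : (x * Pr) ^+ 2 * (3 * mr * rr) = (x ^+ 2 * rr) * (3 * mr * Pr ^+ 2) by ring.
    by rewrite s1; ring.
  have e1 : 0 <= Tr ^+ 2 * (1 + x) ^+ 2 * rr.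
    by apply: mulr_ge0; [apply: mulr_ge0; apply: exprn_ge0 | ]; lra.
  apply: (le_trans (ler_wpM2l e1 hc)).
  have e2 : (1 + x) ^+ 2 <= 121 by nra.
  have e3 : Tr ^+ 2 * (1 + x) ^+ 2 * rr * (2 * Pr ^+ 2) <= Tr ^+ 2 * 121 * (mr * Tr) * (2 * Pr ^+ 2).
    have hP : 0 <= 2 * Pr ^+ 2 by nra.
    apply: ler_wpM2r => //.
    have hT2 : 0 <= Tr ^+ 2 by nra.
    apply: (@le_trans _ _ (Tr ^+ 2 * 121 * rr)); first by apply: ler_wpM2r; [lra | apply: ler_wpM2l].
    by apply: ler_wpM2l; nra.
  apply: (le_trans e3).
  have hP : 0 <= mr * Pr ^+ 2 by nra.
  have -> : Tr ^+ 2 * 121 * (mr * Tr) * (2 * Pr ^+ 2) = 242 * Tr ^+ 3 * (mr * Pr ^+ 2) by ring.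
  have -> : 300 * Tr ^+ 3 * mr * Pr ^+ 2 = 300 * Tr ^+ 3 * (mr * Pr ^+ 2) by ring.
  apply: ler_wpM2r => //; nra.
have pos : 0 < 3 * mr * rr by nra.
rewrite ler_pM2r // in key.
rewrite -/a; nra.
Qed.
Theorem theorem4 (R : realType) :
  exists c0 : R, 0 < c0 /\
  forall (t r : nat), (1 <= t)%N -> ((2 ^ t) ^ 3 <= r)%N ->
  forall A : 'I_r -> {set 'Z_(2 ^ t)},
    (forall i, 2 <= #|A i|)%N ->
    bias_at_most (sumset_mult A)
      [set 0; (2 ^ t.-1)%:R]
      (c0 * ((2 ^ t)%:R * Num.sqrt ((2 ^ t)%:R)) / Num.sqrt (r%:R)).
Proof.
exists 10; split; first lra.
move=> [|s] r // _ Hr A HA.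
rewrite /=.
set eps := (10 * _ / _).
have T2 : (2 <= 2 ^ s.+1)%N by exact: two_pow_gt1.
have r0 : (0 < r)%N by apply: leq_trans Hr; rewrite !expn_gt0.
have e0 : 0 <= eps.
  rewrite /eps; apply: divr_ge0; last exact: sqrtr_ge0.
  apply: mulr_ge0; first lra.
  by apply: mulr_ge0; [rewrite ler0n | exact: sqrtr_ge0].
move=> a h' _; rewrite !inE => /orP [/eqP -> | /eqP ->].
  rewrite addr0 ler_peMl // ?ler0n //; lra.
set h := ((2 ^ s)%:R : 'Z_(2 ^ s.+1)).
have Kpos : (0 < \prod_i (2 * (#|A i| - 1)))%N.
  by apply: prodn_gt0 => i; have := HA i; lia.
rewrite -(ler_pM2l (x := (\prod_i (2 * (#|A i| - 1)))%:R)) ?ltr0n //.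
rewrite mulrCA -!natrM !decomp !natr_sum mulr_sumr.
apply: ler_sum => p _.
rewrite !natrM mulrCA.
case: (boolP [forall i, off (A i) (p i)]) => Hp; last first.
  by rewrite /= !mulr0n !mul0r.
rewrite /= !mulr1n !mul1r.
rewrite !Wpair_set.
apply: (@walk_bias R _ r (2 ^ s.+1)%N) => //.
- exact: Zp_card.
- by rewrite expn_gt0.
- exact: Zp_T.
- exact: Zp_half.
- move=> i; move/forallP: Hp => /(_ i) /and3P [_ _ Hne].
  by rewrite subr_eq0 eq_sym.
- by move=> m Hm; apply: analytic.
Qed.
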